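(* Let $\mathcal A\in\mathbb R^{n_1}\otimes\cdots\otimes\mathbb R^{n_k}$, $1\le s\le k$, $r\le\min\{n_1,\dots,n_k\}$. A point $(U,\mathbf x)\in W_{\mathbf n,r,*}$ is a critical point of $g(U,\mathbf x)=\frac12\|\mathcal A-(U^{(1)},\dots,U^{(k)})\cdot\operatorname{diag}_k(\mathbf x)\|^2$ on $W_{\mathbf n,r,*}$ if and only if $(U,\operatorname{diag}_k(\mathbf x))$ is a KKT point of problem (LRPOTA).
   Context: $\mathrm V(r,n)=\{U\in\mathbb R^{n\times r}:U^{\mathsf T}U=I_r\}$; $\mathrm B(r,n)$: $n\times r$ real matrices with unit columns; $\mathrm{OB}(r,n)$: full-column-rank elements of $\mathrm B(r,n)$. $W_{\mathbf n,r,*}=\mathrm V(r,n_1)\times\cdots\times\mathrm V(r,n_s)\times\mathrm{OB}(r,n_{s+1})\times\cdots\times\mathrm{OB}(r,n_k)\times(\mathbb R\setminus\{0\})^r$, a smooth manifold; critical points of $g$ on it are points where its Riemannian gradient vanishes. $(U^{(1)},\dots,U^{(k)})\cdot\operatorname{diag}_k(\mathbf x)=\sum_jx_j\mathbf u^{(1)}_j\otimes\cdots\otimes\mathbf u^{(k)}_j$. Problem (LRPOTA): minimize $G(U,\lambda)=\|\mathcal A-(U^{(1)},\dots,U^{(k)})\cdot\operatorname{diag}_k(\lambda)\|^2$ over $\lambda\in\mathbb R^r$, $U^{(i)}\in\mathrm V(r,n_i)$ ($i\le s$), $U^{(i)}\in\mathrm B(r,n_i)$ ($i>s$). A feasible $(U,\operatorname{diag}_k(\lambda))$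 is a KKT point if there exist symmetric $P_1,\dots,P_s\in\mathbb R^{r\times r}$ and $\mathbf p_{s+1},\dots,\mathbf p_k\in\mathbb R^r$ with $\nabla_{U^{(i)}}G(U,\lambda)=U^{(i)}P_i$ for $i\le s$, $\nabla_{U^{(i)}}G(U,\lambda)=U^{(i)}\operatorname{diag}(\mathbf p_i)$ for $i>s$, and $\nabla_\lambda G(U,\lambda)=0$ (Lagrange stationarity for the constraints $(U^{(i)})^{\mathsf T}U^{(i)}=I_r$ and unit-norm columns). *)

(* Defs.v *)
From HB Require Import structures.
From mathcomp Require Import all_boot all_order all_algebra.
From mathcomp Require Import all_classical all_reals all_analysis.
Set Implicit Arguments. Unset Strict Implicit. Unset Printing Implicit Defensive.
Import Order.TTheory GRing.Theory Num.Theory.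
Local Open Scope ring_scope.

Section LRPOTA.
Variables (R : realType) (k : nat) (n : 'I_k -> nat) (r : nat).

Definition midx := {dffun forall i : 'I_k, 'I_(n i)}.
Definition tensor := midx -> R.
Definition factors := forall i : 'I_k, 'M[R]_(n i, r).

(* (U^(1),...,U^(k)) . diag_k(x) = sum_j x_j u^(1)_j ⊗ ... ⊗ u^(k)_j *)
Definition mlmul (U : factors) (x : 'rV[R]_r) : tensor :=
  fun a => \sum_(j < r) x 0 j * \prod_(i < k) U i (a i) j.

Definition tnorm2 (T : tensor) : R := \sum_(a : midx) T a ^+ 2.

Definition Gobj (A : tensor) (U : factors) (x : 'rV[R]_r) : R :=
  tnorm2 (fun a => A a - mlmul U x a).
Definition gobj (A : tensor) (U : factors) (x : 'rV[R]_r) : R :=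
  Gobj A U x / 2.

Definition dirU (i : 'I_k) (a : nat) (b : 'I_r) : factors :=
  fun j => \matrix_(p, q) ((i == j) && (val p == a) && (q == b))%:R.

Definition egradU (f : factors -> 'rV[R]_r -> R) (U : factors) (x : 'rV[R]_r)
    (i : 'I_k) : 'M[R]_(n i, r) :=
  \matrix_(a, b) derive1 (fun t : R => f (fun j => U j + t *: dirU i a b j) x) 0.

Definition egradx (f : factors -> 'rV[R]_r -> R) (U : factors) (x : 'rV[R]_r)
    : 'rV[R]_r :=
  \row_j derive1 (fun t : R => f U (x + t *: delta_mx 0 j)) 0.

Definition stiefel m (V : 'M[R]_(m, r)) : Prop := V^T *m V = 1%:M.
Definition unit_cols m (V : 'M[R]_(m, r)) : Prop :=
  forall j : 'I_r, \sum_(a < m) V a j ^+ 2 = 1.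
Definition oblique m (V : 'M[R]_(m, r)) : Prop :=
  unit_cols V /\ \rank V = r.

(* W_{n,r,*}: first s factors (0-based indices i < s) Stiefel, the others
   oblique, all weights nonzero *)
Definition inW (s : nat) (U : factors) (x : 'rV[R]_r) : Prop :=
  (forall i : 'I_k, (i < s)%N -> stiefel (U i)) /\
  (forall i : 'I_k, (s <= i)%N -> oblique (U i)) /\
  (forall j : 'I_r, x 0 j != 0).

(* tangent space of W_{n,r,*} at (U,x), as a subspace of the ambient
   Euclidean space prod_i R^{n_i x r} x R^r *)
Definition tangentW (s : nat) (U : factors) (Z : factors) (z : 'rV[R]_r) : Prop :=
  (forall i : 'I_k, (i < s)%N -> (U i)^T *m Z i + (Z i)^T *m U i = 0) /\
  (forall i : 'I_k, (s <= i)%N ->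
      forall j : 'I_r, \sum_(a < n i) U i a j * Z i a j = 0).

Definition mxdot m (X Y : 'M[R]_(m, r)) : R :=
  \sum_(a < m) \sum_(b < r) X a b * Y a b.
Definition ambdot (Y : factors) (y : 'rV[R]_r) (Z : factors) (z : 'rV[R]_r) : R :=
  \sum_(i < k) mxdot (Y i) (Z i) + \sum_(j < r) y 0 j * z 0 j.

(* (Xi, xi) is the Riemannian gradient of f on W at (U,x) for the metric
   induced by the ambient Euclidean inner product: it is tangent and
   represents the differential of f on the tangent space *)
Definition is_riem_grad (s : nat) (f : factors -> 'rV[R]_r -> R)
    (U : factors) (x : 'rV[R]_r) (Xi : factors) (xi : 'rV[R]_r) : Prop :=
  tangentW s U Xi xi /\
  forall (Z : factors) (z : 'rV[R]_r), tangentW s U Z z ->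
    ambdot Xi xi Z z = ambdot (egradU f U x) (egradx f U x) Z z.

Definition critical_on_W (s : nat) (f : factors -> 'rV[R]_r -> R)
    (U : factors) (x : 'rV[R]_r) : Prop :=
  inW s U x /\ is_riem_grad s f U x (fun i => 0) 0.

Definition KKT_LRPOTA (s : nat) (A : tensor) (U : factors) (x : 'rV[R]_r) : Prop :=
  (forall i : 'I_k, (i < s)%N -> stiefel (U i)) /\
  (forall i : 'I_k, (s <= i)%N -> unit_cols (U i)) /\
  (forall i : 'I_k, (i < s)%N -> exists P : 'M[R]_r,
      P^T = P /\ egradU (Gobj A) U x i = U i *m P) /\
  (forall i : 'I_k, (s <= i)%N -> exists p : 'rV[R]_r,
      egradU (Gobj A) U x i = U i *m diag_mx p) /\
  egradx (Gobj A) U x = 0.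

End LRPOTA.

(* Main.v *)
Require Import Defs.
From HB Require Import structures.
From mathcomp Require Import all_boot all_order all_algebra.
From mathcomp Require Import all_classical all_reals all_analysis.
Import Order.TTheory GRing.Theory Num.Theory.
Local Open Scope ring_scope.
Section D.
Variable R : realType.
Lemma dD (f g : R -> R) : derivable f 0 1 -> derivable g 0 1 ->
  derivable (fun t => f t + g t) 0 1.
Proof. move=> ? ?; exact: derivableD. Qed.
Lemma dB (f g : R -> R) : derivable f 0 1 -> derivable g 0 1 ->
  derivable (fun t => f t - g t) 0 1.
Proof. move=> ? ?; exact: derivableB. Qed.
Lemma dM (f g : R -> R) : derivable f 0 1 -> derivable g 0 1 ->
  derivable (fun t => f t * g t) 0 1.
Proof. move=> ? ?; exact: derivableM. Qed.
Lemma dC (c : R) : derivable (fun _ : R => c) 0 1.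
Proof. exact: derivable_cst. Qed.
Lemma dI : derivable (fun t : R => t) 0 1.
Proof. exact: derivable_id. Qed.
Lemma dsum (I : Type) (s : seq I) (P : pred I) (F : I -> R -> R) :
  (forall i, derivable (F i) 0 1) -> derivable (fun t => \sum_(i <- s | P i) F i t) 0 1.
Proof.
move=> h; elim: s => [|a s IH].
  under eq_fun do rewrite big_nil. exact: dC.
under eq_fun do rewrite big_cons. case: (P a) => //. exact: dD.
Qed.
Lemma dprod (I : Type) (s : seq I) (P : pred I) (F : I -> R -> R) :
  (forall i, derivable (F i) 0 1) -> derivable (fun t => \prod_(i <- s | P i) F i t) 0 1.
Proof.
move=> h; elim: s => [|a s IH].
  under eq_fun do rewrite big_nil. exact: dC.
under eq_fun do rewrite big_cons. case: (P a) => //. exact: dM.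
Qed.
Variables (k : nat) (n : 'I_k -> nat) (r : nat).
Lemma dG (A : tensor R n) (Uf : R -> factors R n r) (xf : R -> 'rV[R]_r) :
  (forall i p q, derivable (fun t => Uf t i p q) 0 1) ->
  (forall q, derivable (fun t => xf t 0 q) 0 1) ->
  derivable (fun t => Gobj A (Uf t) (xf t)) 0 1.
Proof.
move=> hU hx; rewrite /Gobj /tnorm2 /mlmul.
apply: dsum => a. under eq_fun do rewrite expr2.
have h : derivable (fun t => A a - \sum_(j < r) xf t 0 j * \prod_(i < k) Uf t i (a i) j) 0 1.
  apply: dB; first exact: dC.
  apply: dsum => j; apply: dM => //; apply: dprod => i; exact: hU.
exact: dM.
Qed.
Lemma half (A : tensor R n) (Uf : R -> factors R n r) (xf : R -> 'rV[R]_r) :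
  (forall i p q, derivable (fun t => Uf t i p q) 0 1) ->
  (forall q, derivable (fun t => xf t 0 q) 0 1) ->
  derive1 (fun t => gobj A (Uf t) (xf t)) 0 = 2^-1 * derive1 (fun t => Gobj A (Uf t) (xf t)) 0.
Proof.
move=> hU hx; rewrite !derive1E.
have -> : (fun t => gobj A (Uf t) (xf t)) = 2^-1 \*: (fun t => Gobj A (Uf t) (xf t)).
  by apply/funext => t; rewrite /gobj mulrC.
by rewrite deriveZ //; apply: dG.
Qed.
Lemma dlin (c d : R) : derivable (fun t : R => c + t * d) 0 1.
Proof. apply: dD; first exact: dC. apply: dM; [exact: dI| exact: dC]. Qed.
Lemma halfU (A : tensor R n) (U : factors R n r) (x : 'rV[R]_r) i :
  egradU (gobj A) U x i = 2^-1 *: egradU (Gobj A) U x i.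
Proof.
apply/matrixP => a b; rewrite !mxE half //.
  move=> j p q.
  have -> : (fun t => (U j + t *: dirU R n i a b j) p q) = (fun t => U j p q + t * dirU R n i a b j p q).
    by apply/funext => t; rewrite !mxE.
  exact: dlin.
all: try by move=> q; exact: dC.
Qed.
Lemma halfx (A : tensor R n) (U : factors R n r) (x : 'rV[R]_r) :
  egradx (gobj A) U x = 2^-1 *: egradx (Gobj A) U x.
Proof.
apply/matrixP => a b; rewrite !mxE half //.
all: try by move=> j p q; exact: dC.
move=> q.
have -> : (fun t => (x + t *: (delta_mx 0 b : 'rV[R]_r)) 0 q) = (fun t => x 0 q + t * (delta_mx 0 b : 'rV[R]_r) 0 q :> R).
  by apply/funext => t; rewrite !mxE.
exact: dlin.
Qed.
End D.
Section LA.
Variable R : realType.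
Variable r : nat.
Implicit Types (m : nat).

Lemma mxdot_tr m (X Y : 'M[R]_(m, r)) : mxdot X Y = \tr (X^T *m Y).
Proof.
rewrite /mxdot /mxtrace exchange_big; apply: eq_bigr => b _; rewrite mxE.
by apply: eq_bigr => a _; rewrite mxE.
Qed.

Lemma mxdot_skew m (U Z : 'M[R]_(m, r)) (P : 'M[R]_r) :
  P^T = P -> U^T *m Z + Z^T *m U = 0 -> mxdot (U *m P) Z = 0.
Proof.
move=> hP hZ; rewrite mxdot_tr trmx_mul hP -mulmxA.
set W := U^T *m Z.
have hW : W^T = - W.
  by rewrite /W trmx_mul trmxK; apply/eqP; rewrite -subr_eq0 opprK addrC hZ.
have : \tr (P *m W) = - \tr (P *m W).
  rewrite -{1}mxtrace_tr trmx_mul hW hP mulNmx raddfN /=; congr (- _).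
  exact: mxtrace_mulC.
move=> h; apply/eqP; rewrite -[_ == 0](mulrn_eq0 _ 2) mulr2n.
by rewrite {1}h addNr.
Qed.

Lemma mxdot_diag m (U Z : 'M[R]_(m, r)) (p : 'rV[R]_r) :
  (forall j, \sum_(a < m) U a j * Z a j = 0) -> mxdot (U *m diag_mx p) Z = 0.
Proof.
move=> hZ; rewrite /mxdot exchange_big /=; apply: big1 => b _.
transitivity (p 0 b * \sum_(a < m) U a b * Z a b); last by rewrite hZ mulr0.
rewrite mulr_sumr; apply: eq_bigr => a _; rewrite mul_mx_diag mxE.
by rewrite mulrAC mulrC.
Qed.

Lemma mxdotDl m (X Y Z : 'M[R]_(m, r)) : mxdot (X + Y) Z = mxdot X Z + mxdot Y Z.
Proof.
rewrite /mxdot -big_split; apply: eq_bigr => a _; rewrite -big_split.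
by apply: eq_bigr => b _; rewrite mxE mulrDl.
Qed.

Lemma mxdotZl m c (X Z : 'M[R]_(m, r)) : mxdot (c *: X) Z = c * mxdot X Z.
Proof.
rewrite /mxdot mulr_sumr; apply: eq_bigr => a _; rewrite mulr_sumr.
by apply: eq_bigr => b _; rewrite mxE mulrA.
Qed.

Lemma mxdot0l m (Z : 'M[R]_(m, r)) : mxdot 0 Z = 0.
Proof.
by rewrite /mxdot big1 // => a _; rewrite big1 // => b _; rewrite mxE mul0r.
Qed.

Lemma mxdot_ge0 m (X : 'M[R]_(m, r)) : 0 <= mxdot X X.
Proof.
by apply: sumr_ge0 => a _; apply: sumr_ge0 => b _; rewrite -expr2 sqr_ge0.
Qed.

Lemma mxdot_eq0 m (X : 'M[R]_(m, r)) : mxdot X X = 0 -> X = 0.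
Proof.
move=> h; apply/matrixP => a b; rewrite [RHS]mxE.
have h' : \sum_(a < m) \sum_(b < r) X a b ^+ 2 = 0.
  rewrite -[RHS]h /mxdot; apply: eq_bigr => c _; apply: eq_bigr => d _; by rewrite expr2.
have h2 := psumr_eq0P (fun a _ => sumr_ge0 _ (fun b _ => (sqr_ge0 (X a b)))) h' (i := a) isT.
have := psumr_eq0P (fun b _ => sqr_ge0 (X a b)) h2 (i := b) isT.
by move/eqP; rewrite sqrf_eq0 => /eqP.
Qed.
End LA.

Theorem proposition4p5 (R : realType) (k : nat) (n : 'I_k -> nat) (r : nat)
    (s : nat) (A : tensor R n)
    (hs1 : (1 <= s)%N) (hsk : (s <= k)%N)
    (hr : forall i : 'I_k, (r <= n i)%N)
    (U : factors R n r) (x : 'rV[R]_r) :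
  inW s U x ->
  (critical_on_W s (gobj A) U x <-> KKT_LRPOTA s A U x).
Proof.
move=> hW; have [hst [hob hx0]] := hW.
set GU := egradU (Gobj A) U x; set gx := egradx (Gobj A) U x.
have amb_half : forall Z z, ambdot (egradU (gobj A) U x) (egradx (gobj A) U x) Z z
    = 2^-1 * ambdot GU gx Z z.
  move=> Z z; rewrite /ambdot mulrDr mulr_sumr mulr_sumr; congr (_ + _).
    by apply: eq_bigr => i _; rewrite halfU mxdotZl.
  by apply: eq_bigr => j _; rewrite halfx mxE mulrA.
have amb0 : forall Z z, ambdot (fun i => 0 : 'M[R]_(n i, r)) (0 : 'rV[R]_r) Z z = 0.
  move=> Z z; rewrite /ambdot big1 ?add0r; last by move=> i _; exact: mxdot0l.
  by apply: big1 => j _; rewrite mxE mul0r.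
have crit : critical_on_W s (gobj A) U x <->
    (forall Z z, tangentW s U Z z -> ambdot GU gx Z z = 0).
  split.
    move=> [_ [_ h]] Z z hZ; have := h Z z hZ; rewrite amb0 amb_half => /esym/eqP.
    by rewrite mulf_eq0 invr_eq0 pnatr_eq0 /= => /eqP.
  move=> h; split => //; split.
    split => i _; first by rewrite mulmx0 trmx0 mul0mx addr0.
    by move=> j; apply: big1 => a _; rewrite mxE mulr0.
  by move=> Z z hZ; rewrite amb0 amb_half h // mulr0.
rewrite crit; split.
  move=> horth.
  have hGUdef : GU = egradU (Gobj A) U x by [].
  have hgxdef : gx = egradx (Gobj A) U x by [].
  clearbody GU gx.
  pose Pm (i : 'I_k) := 2^-1 *: ((U i)^T *m GU i + (GU i)^T *m U i).
  pose pv (i : 'I_k) := \row_j \sum_(a < n i) U i a j * GU i a j.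
  pose Q (i : 'I_k) : 'M[R]_(n i, r) := if (i < s)%N then U i *m Pm i else U i *m diag_mx (pv i).
  pose M : factors R n r := fun i => GU i - Q i.
  have PmT : forall i : 'I_k, (Pm i)^T = Pm i.
    by move=> i; rewrite /Pm linearZ /= linearD /= !trmx_mul !trmxK addrC.
  have hMs : forall i : 'I_k, (i < s)%N -> (U i)^T *m M i + (M i)^T *m U i = 0.
    move=> i his; rewrite /M /Q his mulmxBr linearB /= mulmxBl trmx_mul PmT.
    rewrite mulmxA (hst i his) mul1mx -mulmxA (hst i his) mulmx1.
    rewrite addrACA -opprD; apply/eqP; rewrite subr_eq0; apply/eqP.
    have h2 : (2^-1 + 2^-1 : R) = 1 by rewrite [RHS](splitr 1) div1r.
    by rewrite /Pm -scalerDl h2 scale1r.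
  have hMo : forall i : 'I_k, (s <= i)%N -> forall j, \sum_(a < n i) U i a j * M i a j = 0.
    move=> i his j; rewrite /M /Q ltnNge his /=.
    rewrite mul_mx_diag; under eq_bigr do rewrite !mxE mulrBr.
    rewrite sumrB; apply/eqP; rewrite subr_eq0; apply/eqP.
    under [RHS]eq_bigr do rewrite mulrA -expr2.
    by rewrite -mulr_suml ((hob i his).1 j) mul1r.
  have hQ : forall i : 'I_k, mxdot (Q i) (M i) = 0.
    move=> i; rewrite /Q; case: ifP => his.
      by apply: mxdot_skew; [exact: PmT | exact: hMs].
    by apply: mxdot_diag; apply: hMo; rewrite leqNgt his.
  have hGM : forall i : 'I_k, mxdot (GU i) (M i) = mxdot (M i) (M i).
    move=> i; have -> : GU i = M i + Q i by rewrite /M subrK.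
    by rewrite mxdotDl hQ addr0.
  have hT : tangentW s U M gx by split; [exact: hMs | exact: hMo].
  have h0 := horth M gx hT; rewrite /ambdot in h0.
  have e : \sum_(i < k) mxdot (GU i) (M i) = \sum_(i < k) mxdot (M i) (M i).
    by apply: eq_bigr => i _; exact: hGM.
  rewrite e in h0.
  have s1 : 0 <= \sum_(i < k) mxdot (M i) (M i) by apply: sumr_ge0 => i _; apply: mxdot_ge0.
  have s2 : 0 <= \sum_(j < r) gx 0 j * gx 0 j.
    by apply: sumr_ge0 => j _; rewrite -expr2 sqr_ge0.
  move/eqP: h0; rewrite paddr_eq0 // => /andP [/eqP e1 /eqP e2].
  have hM0 : forall i : 'I_k, M i = 0.
    move=> i; apply: mxdot_eq0.
    exact: (psumr_eq0P (fun i _ => @mxdot_ge0 _ _ _ (M i)) e1 (i := i) isT).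
  have hGQ : forall i : 'I_k, GU i = Q i.
    by move=> i; apply/eqP; rewrite -subr_eq0; apply/eqP; exact: hM0.
  rewrite /KKT_LRPOTA -hGUdef -hgxdef.
  split; first exact: hst.
  split; first by move=> i his; exact: (hob i his).1.
  split.
    move=> i his; exists (Pm i); split; first exact: PmT.
    by have := hGQ i; rewrite /Q his.
  split.
    move=> i his; exists (pv i).
    by have := hGQ i; rewrite /Q ltnNge his.
  apply/rowP => j; rewrite [RHS]mxE.
  have e2b : \sum_(j < r) gx 0 j ^+ 2 = 0 by rewrite -[RHS]e2; apply: eq_bigr => c _; rewrite expr2.
  have := psumr_eq0P (fun j _ => (sqr_ge0 (gx 0 j))) e2b (i := j) isT.
  by move/eqP; rewrite sqrf_eq0 => /eqP.
move=> [_ [_ [hP [hp hg]]]] Z z [hZs hZo].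
have hg0 : gx = 0 by exact: hg.
rewrite /ambdot hg0 [X in _ + X]big1 ?addr0; last by move=> j _; rewrite mxE mul0r.
apply: big1 => i _; rewrite /GU; case: (ltnP i s) => his.
  have [P [PT ->]] := hP i his; exact: mxdot_skew (hZs i his).
have [p ->] := hp i his; exact: mxdot_diag (hZo i his).
Qed.
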